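(* Let $G$ be a finite simple connected graph that is edge-reconstructable (so that $ern(G)$ is defined), and suppose $ern(G)\geq 3$. Then $G$ is $2$-swappable.
   Context: All graphs are finite and simple. For a graph $G$ and $e\in E(G)$, the unlabeled graph $G-e$ is an edge-card of $G$; the edge-deck $\mathcal{ED}(G)$ is the multiset of all edge-cards $G-e$, $e\in E(G)$ (taken up to isomorphism). For a sub-multiset $S\subseteq\mathcal{ED}(G)$, a blocker of $S$ is a graph $H\not\cong G$ such that $S\subseteq\mathcal{ED}(H)$ as multisets. $G$ is reconstructable from $S$ if $S$ has no blocker; $G$ is edge-reconstructable if it is reconstructable from $\mathcal{ED}(G)$. For such $G$, the edge reconstruction number $ern(G)$ is the minimum size of a sub-multiset $S\subseteq\mathcal{ED}(G)$ from which $G$ is reconstructable. For $A\subseteq E(G)$ and $B\subseteq E(\bar G)$ (edges of the complement), $G-A+B$ denotes the graph on $V(G)$ with edge set $(E(G)\setminus A)\cup B$. For a positive integer $k$, $G$ is $k$-swappable if for every $e\in E(G)$ there exist $A\subseteq E(G)$ and $B\subseteq E(\bar G)$ with $e\in A$, $|A|\leq k$, and $G\cong G-A+B$. *)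

(* Defs.v *)
From mathcomp Require Import all_boot.
Set Implicit Arguments. Unset Strict Implicit. Unset Printing Implicit Defensive.

Definition simple_graph (n : nat) (E : {set {set 'I_n}}) : bool :=
  [forall e in E, #|e| == 2].

Definition adj (n : nat) (E : {set {set 'I_n}}) : rel 'I_n :=
  fun x y => [set x; y] \in E.
Definition connected_graph (n : nat) (E : {set {set 'I_n}}) : Prop :=
  forall x y : 'I_n, connect (adj E) x y.

Definition graph_iso (n m : nat) (E : {set {set 'I_n}}) (F : {set {set 'I_m}}) : Prop :=
  exists f : 'I_n -> 'I_m, bijective f /\ (fun e : {set 'I_n} => f @: e) @: E = F.

(* A sub-multiset S of the edge-deck ED(G) is given by a set A of edges of G:
   S = {{ G - a : a in A }}.  S is contained (as a multiset, up to isomorphism)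
   in ED(H) iff there is an injection phi : A -> E(H) with G - a ~= H - phi a. *)
Definition subdeck (n m : nat) (E : {set {set 'I_n}}) (A : {set {set 'I_n}})
  (F : {set {set 'I_m}}) : Prop :=
  exists phi : {set 'I_n} -> {set 'I_m},
    {in A &, injective phi} /\
    forall a, a \in A -> phi a \in F /\ graph_iso (E :\ a) (F :\ phi a).

Definition blocker (n m : nat) (E : {set {set 'I_n}}) (A : {set {set 'I_n}})
  (F : {set {set 'I_m}}) : Prop :=
  simple_graph F /\ ~ graph_iso E F /\ subdeck E A F.

Definition reconstructable_from (n : nat) (E : {set {set 'I_n}}) (A : {set {set 'I_n}}) : Prop :=
  forall (m : nat) (F : {set {set 'I_m}}), ~ blocker E A F.

Definition edge_reconstructable (n : nat) (E : {set {set 'I_n}}) : Prop :=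
  reconstructable_from E E.

Definition ern_is (n : nat) (E : {set {set 'I_n}}) (k : nat) : Prop :=
  (exists A : {set {set 'I_n}}, A \subset E /\ #|A| = k /\ reconstructable_from E A) /\
  (forall A : {set {set 'I_n}}, A \subset E -> reconstructable_from E A -> k <= #|A|).

Definition non_edge (n : nat) (E : {set {set 'I_n}}) (b : {set 'I_n}) : bool :=
  (#|b| == 2) && (b \notin E).

Definition swappable (n : nat) (E : {set {set 'I_n}}) (k : nat) : Prop :=
  forall e, e \in E ->
    exists (A B : {set {set 'I_n}}),
      [/\ A \subset E, [forall b in B, non_edge E b], e \in A, #|A| <= k &
          graph_iso E ((E :\: A) :|: B)].

(* Main.v *)
Require Import Defs.
From mathcomp Require Import all_boot.
From Stdlib Require Import Classical.

Set Implicit Arguments. Unset Strict Implicit. Unset Printing Implicit Defensive.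

Definition SwapAt (n : nat) (E : {set {set 'I_n}}) (e : {set 'I_n}) : Prop :=
  exists (A B : {set {set 'I_n}}),
      [/\ A \subset E, [forall b in B, non_edge E b], e \in A, #|A| <= 2 &
          graph_iso E ((E :\: A) :|: B)].

Lemma imsetD1_inj (T U : finType) (g : T -> U) (A : {set T}) a :
  injective g -> g @: (A :\ a) = g @: A :\ g a.
Proof.
move=> ig; apply/setP=> y; rewrite !inE; apply/imsetP/andP.
- case=> x; rewrite !inE => /andP[xa xA] ->; split; first by rewrite (inj_eq ig).
  exact: imset_f.
- case=> ya /imsetP[x xA ey]; exists x => //; rewrite !inE xA andbT.
  by apply: contra ya => /eqP ex; rewrite ey ex.
Qed.

Lemma imset_imset_comp (T U V : finType) (f : U -> V) (g : T -> U) (X : {set {set T}}) :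
  (fun y : {set T} => (f \o g) @: y) @: X = (fun y : {set U} => f @: y) @: ((fun y : {set T} => g @: y) @: X).
Proof.
rewrite -imset_comp; apply: eq_imset => y /=; exact: imset_comp.
Qed.

Lemma SW (n : nat) (E : {set {set 'I_n}}) (e x b d : {set 'I_n}) (s : 'I_n -> 'I_n) :
  bijective s -> e \in E -> x \in E -> x != e -> b \notin E -> #|b| = 2 ->
  #|d| = 2 -> d \notin (b |: (E :\ e)) :\ x -> d != e ->
  (fun y : {set 'I_n} => s @: y) @: E = d |: ((b |: (E :\ e)) :\ x) -> SwapAt E e.
Proof.
move=> bs eE xE xe bE cb cd dn de Him.
have be : b != e by apply: contraNneq bE => ->.
have bx : b != x by apply: contraNneq bE => ->.
case: (eqVneq d x) => [dx|dx].
- exists [set e], [set b]; split.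
  + by rewrite sub1set.
  + apply/forallP => y; apply/implyP; rewrite inE => /eqP->.
    by rewrite /non_edge cb eqxx.
  + by rewrite inE.
  + by rewrite cards1.
  + exists s; split => //; rewrite Him dx; apply/setP => y; rewrite !inE.
    case: (eqVneq y x) => [->|yx]; first by rewrite xE xe.
    case: (eqVneq y b) => [->|yb]; rewrite ?orbT ?orbF //=.
- have dE : d \notin E.
    apply: contra dn => dE; by rewrite !inE dx dE de orbT.
  exists [set e; x], [set b; d]; split.
  + by apply/subsetP => y; rewrite !inE => /orP[]/eqP->.
  + apply/forallP => y; apply/implyP; rewrite !inE => /orP[]/eqP->;
      by rewrite /non_edge ?cb ?cd eqxx.
  + by rewrite !inE eqxx.
  + by rewrite cards2; case: (e != x).
  + exists s; split => //; rewrite Him; apply/setP => y; rewrite !inE.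
    have db : d != b by apply: contra dn => /eqP->; rewrite !inE eqxx (negPf bx).
    have xd : x != d by rewrite eq_sym.
    have xb : x != b by rewrite eq_sym.
    case: (eqVneq y d) => [->|yd]; first by rewrite !orbT.
    case: (eqVneq y x) => [->|yx]; first by rewrite ?(negPf xd) ?(negPf xb) /= ?orbT ?orbF.
    case: (eqVneq y b) => [->|yb]; first by rewrite ?bx !orbT.
    by rewrite ?(negPf yd) ?(negPf yx) ?(negPf yb) /= ?orbF.
Qed.

Lemma set_cancel (n m : nat) (sig : 'I_n -> 'I_m) (si : 'I_m -> 'I_n)
  (X : {set {set 'I_n}}) : cancel sig si ->
  (fun y : {set 'I_m} => si @: y) @: ((fun y : {set 'I_n} => sig @: y) @: X) = X.
Proof.
move=> sK; rewrite -imset_comp -[RHS]imset_id; apply: eq_imset => y /=.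
by rewrite -imset_comp (eq_imset _ sK) imset_id.
Qed.

Lemma pair_step (n : nat) (E : {set {set 'I_n}}) (e f : {set 'I_n}) (m : nat)
  (F : {set {set 'I_m}}) :
  simple_graph E -> e \in E -> f \in E -> f != e -> blocker E [set e; f] F ->
  SwapAt E e \/ exists (t : 'I_n -> 'I_n) (h b : {set 'I_n}),
    [/\ bijective t, h \in E, h != e, b \notin E &
      [/\ #|b| = 2, (fun y : {set 'I_n} => t @: y) @: E = b |: (E :\ h) & t @: f = e]].
Proof.
move=> sE eE fE fe [sF [niso [phi [phinj Hphi]]]].
have eA : e \in [set e; f] by rewrite !inE eqxx.
have fA : f \in [set e; f] by rewrite !inE eqxx orbT.
case: (Hphi e eA) => phie [sig [bsig Hsig]].
case: (Hphi f fA) => phif [mu [bmu Hmu]].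
case: (bsig) => si sK Ks.
pose S := fun y : {set 'I_m} => si @: y.
have Sinj : injective S := imset_inj (can_inj Ks).
have HSF : S @: (F :\ phi e) = E :\ e by rewrite -Hsig set_cancel.
rewrite imsetD1_inj // in HSF.
set b := S (phi e) in HSF.
have bSF : b \in S @: F := imset_f _ phie.
have SF : S @: F = b |: (E :\ e) by rewrite -HSF setD1K.
have bnot : b \notin E :\ e by rewrite -HSF !inE eqxx.
have be : b != e.
  apply/eqP => be; apply: niso; exists sig; split => //.
  have SFE : S @: F = E by rewrite SF be setD1K.
  rewrite -SFE; exact: (set_cancel _ Ks).
have bE : b \notin E by move: bnot; rewrite !inE be.
have cb : #|b| = 2.
  rewrite /b /S card_imset; last exact: (can_inj Ks).
  by move/forallP: sF => /(_ (phi e)) /implyP /(_ phie) /eqP.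
pose t := si \o mu.
have bt : bijective t := bij_comp (Bijective Ks sK) bmu.
have tinj : injective t := bij_inj bt.
pose h := S (phi f).
have htE : (fun y : {set 'I_n} => t @: y) @: (E :\ f) = (b |: (E :\ e)) :\ h.
  by rewrite /t imset_imset_comp Hmu imsetD1_inj // SF.
have hb : h != b.
  apply/eqP => /Sinj /(phinj _ _ fA eA) /eqP; by rewrite (negPf fe).
have hSF : h \in S @: F := imset_f _ phif.
rewrite SF !inE (negPf hb) /= in hSF; case/andP: hSF => he hE.
pose d := t @: f.
have tE : (fun y : {set 'I_n} => t @: y) @: E = d |: ((b |: (E :\ e)) :\ h).
  by rewrite -{1}(setD1K fE) imsetU1 htE.
have dn : d \notin (b |: (E :\ e)) :\ h.
  rewrite -htE mem_imset; first by rewrite !inE eqxx.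
  exact: imset_inj tinj.
have cd : #|d| = 2.
  rewrite /d card_imset //.
  by move/forallP: sE => /(_ f) /implyP /(_ fE) /eqP.
case: (eqVneq d e) => [de|dne].
- right; exists t, h, b; split => //; split => //.
  rewrite tE de; apply/setP => y; rewrite !inE.
  case: (eqVneq y e) => [->|ye]; first by rewrite (eq_sym e h) he eE orbT.
  case: (eqVneq y h) => [->|yh]; first by rewrite ?(negPf hb) /= ?orbF.
  by rewrite /= ?orbF.
- left; exact: (SW bt eE hE he bE cb cd dn dne tE).
Qed.

Lemma final_step (n : nat) (E : {set {set 'I_n}}) (e : {set 'I_n})
  (t1 t2 : 'I_n -> 'I_n) (h1 b1 h2 b2 : {set 'I_n}) :
  e \in E -> bijective t1 -> bijective t2 -> b1 \notin E -> #|b1| = 2 ->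
  (fun y : {set 'I_n} => t1 @: y) @: E = b1 |: (E :\ h1) ->
  h2 \in E -> h2 != e -> b2 \notin E -> #|b2| = 2 ->
  (fun y : {set 'I_n} => t2 @: y) @: E = b2 |: (E :\ h2) ->
  t2 @: h1 = e -> SwapAt E e.
Proof.
move=> eE bt1 bt2 b1E cb1 H1 h2E h2e b2E cb2 H2 th1.
have t2inj : injective t2 := bij_inj bt2.
have T2inj : injective (fun y : {set 'I_n} => t2 @: y) := imset_inj t2inj.
pose d := t2 @: b1.
have dn : d \notin b2 |: (E :\ h2) by rewrite -H2 mem_imset.
have cd : #|d| = 2 by rewrite /d card_imset.
have de : d != e by apply: contraNneq dn => ->; rewrite !inE (eq_sym e h2) h2e eE orbT.
have b2e : b2 != e by apply: contraNneq b2E => ->.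
have dn' : d \notin (b2 |: (E :\ e)) :\ h2.
  apply: contra dn; rewrite !inE => /andP[dh /orP[->//|/andP[_ ->]]]; by rewrite dh orbT.
apply: (@SW n E e h2 b2 d (t2 \o t1) (bij_comp bt2 bt1) eE h2E h2e b2E cb2 cd dn' de).
rewrite imset_imset_comp H1 imsetU1 imsetD1_inj // th1 H2 -/d.
congr (_ |: _); apply/setP => y; rewrite !inE.
case: (eqVneq y e) => [->|ye]; first by rewrite (eq_sym e b2) (negPf b2e) /= andbF.
case: (eqVneq y h2) => [->|yh]; rewrite /= ?orbF ?andbF //.
by apply/eqP => hb; move: b2E; rewrite -hb h2E.
Qed.

Theorem mainTheorem1 (n : nat) (E : {set {set 'I_n}}) :
  simple_graph E -> connected_graph E -> edge_reconstructable E ->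
  (exists k, ern_is E k /\ 3 <= k) ->
  swappable E 2.
Proof.
move=> sE _ _ [k [[[A0 [A0E [cA0 _]]] kmin] k3]] e eE.
have nrec : forall f, f \in E -> f != e ->
    exists m (F : {set {set 'I_m}}), blocker E [set e; f] F.
  move=> f fE fe; apply: NNPP => H.
  have rec : reconstructable_from E [set e; f].
    move=> m F bl; apply: H; by exists m, F.
  have sub : [set e; f] \subset E by apply/subsetP => y; rewrite !inE => /orP[]/eqP->.
  have := kmin _ sub rec; rewrite cards2 eq_sym fe => k2.
  by move: (leq_trans k3 k2).
have [f0 f0E f0e] : exists2 f0, f0 \in E & f0 != e.
  have : 0 < #|E :\ e|.
    have := subset_leq_card A0E; rewrite cA0 (cardsD1 e E) eE => /(leq_trans k3).
    by rewrite add1n ltnS => /(leq_trans _); apply.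
  rewrite card_gt0 => /set0Pn [f0]; rewrite !inE => /andP[f0e f0E].
  by exists f0.
have [m [F bl]] := nrec f0 f0E f0e.
case: (pair_step sE eE f0E f0e bl) => [//|[t1 [h1 [b1 [bt1 h1E h1e b1E [cb1 H1 _]]]]]].
have [m2 [F2 bl2]] := nrec h1 h1E h1e.
case: (pair_step sE eE h1E h1e bl2) => [//|[t2 [h2 [b2 [bt2 h2E h2e b2E [cb2 H2 th1]]]]]].
exact: (final_step eE bt1 bt2 b1E cb1 H1 h2E h2e b2E cb2 H2 th1).
Qed.
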